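(* Let $K$ be a field of characteristic $0$ such that $K_{\mathrm{ab}}/\mathbb{Q}$ has finite degree, let $\lambda$ be the number of roots of unity in $K$, and let $p$ be a prime with $p\nmid\lambda$. Then for every positive integer $n$, $$H^1(G_n,\mu_{p^{\operatorname{ord}_p(n)}})=0.$$
   Context: $K_{\mathrm{ab}}$ is the maximal abelian subextension of $K/\mathbb{Q}$. $\mu_m$ is the Galois module of $m$th roots of unity, $\zeta_n$ a primitive $n$th root of unity, $G_n:=\mathrm{Gal}(K(\zeta_n)/K)$ acting naturally on roots of unity. *)

(* Defs.v *)
From HB Require Import structures.
From mathcomp Require Import all_boot all_order all_algebra all_fingroup all_solvable all_field.
Set Implicit Arguments. Unset Strict Implicit. Unset Printing Implicit Defensive.
Import GRing.Theory.
Local Open Scope ring_scope.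

(* K_ab / Q has finite degree: the degrees of the finite abelian Galois
   extensions F/Q embedding into K (i.e. the finite abelian Galois
   subextensions of K/Q, whose union/compositum is K_ab) are bounded. *)
Definition Kab_finite (K : fieldType) : Prop :=
  exists d : nat, forall (F : splittingFieldType rat) (f : {rmorphism F -> K}),
    galois 1%AS (fullv : {vspace F}) ->
    abelian 'Gal((fullv : {vspace F}) / 1%AS) ->
    (\dim (fullv : {vspace F}) <= d)%N.

Definition num_roots_of_unity (K : fieldType) (lam : nat) : Prop :=
  exists s : seq K, [/\ uniq s, size s = lam &
    forall x : K, x \in s <-> exists m : nat, (0 < m)%N /\ x ^+ m = 1].

(* H^1(G, mu_m) = 0 for G a subgroup of a Galois group of E acting naturally
   on mu_m(E) (written multiplicatively): every crossed homomorphism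
   (1-cocycle) is a principal one (1-coboundary).  Note MathComp composes
   automorphisms as (s * t)%g x = t (s x), so "s o t" is (t * s)%g. *)
Definition cocycle (F0 : fieldType) (E : splittingFieldType F0)
    (G : {set gal_of (fullv : {vspace E})}) (m : nat)
    (c : gal_of (fullv : {vspace E}) -> E) : Prop :=
  (forall s, s \in G -> c s ^+ m = 1) /\
  (forall s t, s \in G -> t \in G -> c (t * s)%g = c s * s (c t)).

Definition coboundary (F0 : fieldType) (E : splittingFieldType F0)
    (G : {set gal_of (fullv : {vspace E})}) (m : nat)
    (c : gal_of (fullv : {vspace E}) -> E) : Prop :=
  exists a : E, a ^+ m = 1 /\ (forall s, s \in G -> c s = s a / a).

Definition H1_mu_trivial (F0 : fieldType) (E : splittingFieldType F0)
    (G : {set gal_of (fullv : {vspace E})}) (m : nat) : Prop :=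
  forall c, cocycle G m c -> coboundary G m c.

(* Main.v *)
Require Import Defs.
From HB Require Import structures.
From mathcomp Require Import all_boot all_order all_algebra all_fingroup all_solvable all_field.
Local Open Scope ring_scope.
Import GRing.Theory.

Lemma no_p_root (K : fieldType) (s : seq K) (p : nat) :
  uniq s -> (forall x : K, x \in s <-> exists m : nat, (0 < m)%N /\ x ^+ m = 1) ->
  prime p -> ~~ (p %| size s)%N -> forall k : K, k ^+ p = 1 -> k = 1.
Proof.
move=> us Hs pp npl k kp.
have p0 : (0 < p)%N by exact: prime_gt0.
have sub : {subset map (fun x => k * x) s <= s}.
  move=> y /mapP[x /Hs [m [m0 xm]] ->]; apply/Hs; exists (p * m)%N; split.
    by rewrite muln_gt0 p0.
  by rewrite exprMn exprM kp expr1n mulnC exprM xm expr1n mul1r.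
have kn0 : k != 0.
  by apply/eqP=> k0; move: kp; rewrite k0 expr0n (gtn_eqF p0) => /esym/eqP; rewrite oner_eq0.
have umap : uniq (map (fun x => k * x) s).
  by rewrite (map_inj_uniq (mulfI kn0)).
have [_ eqs] := uniq_min_size umap sub (eq_leq (esym (size_map _ _))).
have pe : perm_eq (map (fun x => k * x) s) s by apply: uniq_perm.
have P0 : \prod_(x <- s) x != 0.
  rewrite prodf_seq_neq0; apply/allP=> x /Hs [m [m0 xm]] /=.
  by apply/eqP=> x0; move: xm; rewrite x0 expr0n (gtn_eqF m0) => /esym/eqP; rewrite oner_eq0.
have kl : k ^+ size s = 1.
  have e1 : \prod_(x <- map (fun x => k * x) s) x = \prod_(x <- s) x by apply: perm_big.
  have cst : \prod_(x <- s) k = k ^+ size s.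
    by elim: (s) => [|y t IH]; rewrite ?big_nil ?big_cons ?IH ?exprS.
  move: e1; rewrite big_map big_split /= cst => /eqP.
  rewrite -[X in _ == X]mul1r (inj_eq (mulIf P0)) => /eqP.
  done.
have [d dprim dp] := prim_order_exists p0 kp.
have := prim_order_dvd dprim (size s); rewrite kl eqxx => dl.
case/primeP: pp => _ /(_ d dp) /orP[/eqP d1|/eqP dpe].
  by move: dprim; rewrite d1 => /prim_expr_order; rewrite expr1.
by move: npl; rewrite -dpe dl.
Qed.

Theorem lemma2p5 (K : fieldType) (lam p : nat) :
  [pchar K] =i pred0 ->
  Kab_finite K ->
  num_roots_of_unity K lam ->
  prime p -> ~~ (p %| lam)%N ->
  forall (n : nat), (0 < n)%N ->
  forall (E : splittingFieldType K),
    splittingFieldFor 1%AS ('X^n - 1 : {poly E}) fullv ->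
    H1_mu_trivial ('Gal((fullv : {vspace E}) / 1%AS))%g (p ^ logn p n).
Proof.
move=> ch0 _ [s [us szs Hs]] pp npl n n0 E splitE c [cm ccoc].
set m := (p ^ logn p n)%N.
have [k0|kpos] := eqVneq (logn p n) 0%N.
  exists 1; split; first by rewrite expr1n.
  move=> t tG; rewrite rmorph1 divr1.
  by have := cm t tG; rewrite /m k0 expn0 expr1.
have p1 : (1 < p)%N by exact: prime_gt1.
have m1 : (1 < m)%N by rewrite /m -(expn0 p) ltn_exp2l // lt0n.
have m0 : (0 < m)%N by exact: ltnW.
have mn : (m %| n)%N by exact: pfactor_dvdnn.
have pm : (p %| m)%N by rewrite /m -{1}(expn1 p) dvdn_exp2l // lt0n.
have natE : forall q : nat, (q%:R == 0 :> E) = (q == 0%N).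
  apply/pcharf0P => q; rewrite (pchar_lalg E) ch0.
  done.
have [rs Drs defE] := splitE.
have urs : uniq rs.
  rewrite -separable_prod_XsubC -(eqp_separable Drs) separable_Xn_sub_1 //.
  by rewrite natE -lt0n.
have szrs : size rs = n.
  have := eqp_size Drs; rewrite size_prod_XsubC size_Xn_sub_1 //.
  by case.
have rsroot : all n.-unity_root rs.
  apply/allP=> r rin; rewrite unity_rootE -subr_eq0.
  have : root (\prod_(x <- rs) ('X - x%:P)) r by rewrite root_prod_XsubC.
  by rewrite -(eqp_root Drs) /root !hornerE.
have /hasP[w win wprim] := has_prim_root n0 rsroot urs (eq_leq (esym szrs)).
set G := ('Gal((fullv : {vspace E}) / 1%AS))%g.
have rsw : forall r, r ^+ n = 1 -> r \in <<1%AS; w>>%VS.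
  move=> r /(prim_rootP wprim)[i ->]; apply: rpredX; exact: memv_adjoin.
have fullw : forall a : E, a \in <<1%AS; w>>%VS.
  move=> a; have : a \in (fullv : {vspace E}) by exact: memvf.
  rewrite -defE => /(subvP (_ : <<1%AS & rs>> <= <<1%AS; w>>)%VS); apply.
  apply/Fadjoin_seqP; split; first exact: subv_adjoin.
  by move=> r rin; apply: rsw; apply/eqP; rewrite -unity_rootE (allP rsroot).
have comm : forall x y, x \in G -> y \in G -> (x * y = y * x)%g.
  move=> x y xG yG; apply/eqP/gal_eqP => a _.
  rewrite !galM ?memvf //.
  have /Fadjoin_polyP[q qo ->] := fullw a.
  rewrite -!horner_map !(fixedPoly_gal (sub1v _) xG qo) !(fixedPoly_gal (sub1v _) yG qo) /=.
  rewrite (fixedPoly_gal (sub1v _) xG qo).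
  by rewrite (aut_unity_rootC x y n0 (prim_expr_order wprim)).
have galE : galois 1%AS (fullv : {subfield E}).
  apply/splitting_galoisField; exists ('X^n - 1); split => //.
    by rewrite rpredB ?rpredX ?polyOverX ?rpred1.
  by rewrite separable_Xn_sub_1 // natE -lt0n.
have fixG := galois_fixedField galE.
set om := w ^+ (n %/ m).
have omprim : m.-primitive_root om by exact: dvdn_prim_root.
set z := om ^+ (m %/ p).
have zprim : p.-primitive_root z by exact: dvdn_prim_root.
have znK : z \notin (1%AS : {subfield E}).
  apply/negP => /vlineP[k zk].
  have kp : k ^+ p = 1.
    apply: (fmorph_inj (GRing.in_alg E)); rewrite rmorphXn rmorph1 /=.
    by rewrite /GRing.in_alg /= -zk (prim_expr_order zprim).
  have k1 := @no_p_root _ _ _ us Hs pp (ltac:(by rewrite szs)) k kp.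
  have := prim_order_dvd zprim 1; rewrite zk k1 scale1r expr1 eqxx.
  by rewrite dvdn1 => /eqP p1'; move: p1; rewrite p1'.
have [sg sgG sgz] : exists2 sg, sg \in G & sg z != z.
  apply/exists_inP; apply: contraR znK; rewrite negb_exists_in => /forall_inP H.
  rewrite -fixG; apply/fixedFieldP; first exact: memvf.
  by move=> x /H /negPn /eqP.
have [r rm sgom] := aut_prim_rootP sg omprim.
have r0 : (0 < r)%N.
  rewrite lt0n; apply: contraTneq rm => ->.
  by rewrite /coprime gcd0n gtn_eqF.
have sgx : forall x, x ^+ m = 1 -> sg x = x ^+ r.
  by move=> x /(prim_rootP omprim)[i ->]; rewrite rmorphXn sgom exprAC.
set e := r.-1.
have re : r = e.+1 by rewrite prednK.
have zm : z ^+ m = 1 by rewrite /z exprAC (prim_expr_order omprim) expr1n.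
have pe : ~~ (p %| e)%N.
  apply: contra sgz => pe; rewrite sgx // re exprS.
  by move: pe; rewrite (prim_order_dvd zprim) => /eqP ->; rewrite mulr1.
have cop : coprime m e.
  by rewrite /m coprime_sym coprime_pexpr ?lt0n // coprime_sym prime_coprime.
have [a _ ma] := Bezoutl e m0.
move: ma; rewrite (eqP cop) => ma.
have xinv : forall x : E, x ^+ m = 1 -> x ^+ (a * e) * x = 1.
  move=> x xm; rewrite -exprSr -(expr_mod _ xm).
  by move: ma; rewrite /dvdn add1n => /eqP ->; rewrite expr0.
have cne0 : forall t, t \in G -> c t != 0.
  move=> t tG; apply/eqP => ct0; have := cm t tG.
  by rewrite ct0 expr0n (gtn_eqF m0) => /esym/eqP; rewrite oner_eq0.
have key : forall t, t \in G -> t (c sg) = c sg * c t ^+ e.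
  move=> t tG; apply: (mulfI (cne0 t tG)).
  have h1 := ccoc sg t sgG tG; have h2 := ccoc t sg tG sgG.
  rewrite -(comm t sg tG sgG) h1 in h2.
  by rewrite -h2 sgx ?cm // re exprS mulrCA.
exists (c sg ^+ a)^-1; split.
  by rewrite exprVn -exprM mulnC exprM cm // expr1n invr1.
move=> t tG.
have csa : c sg ^+ a != 0 by rewrite expf_neq0 ?cne0.
rewrite rmorphV ?unitfE // rmorphXn -[X in X ^- a]/(t (c sg)) key // exprMn invrK invfM.
rewrite mulrAC mulVf // mul1r -exprM mulnC.
have nz : c t ^+ (a * e) != 0 by rewrite expf_neq0 ?cne0.
apply: (mulfI nz); rewrite mulfV //; exact: xinv (cm t tG).
Qed.
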